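(* Let $X$ be a real Hilbert space, let $A$ be a closed linear subspace of $X$, let $C$ be a nonempty closed convex subset of $A$, and let $(x_n)_{n\in\mathbb{N}}$ be a sequence in $X$. Suppose that $(x_n)_{n\in\mathbb{N}}$ is Fejér monotone with respect to $C$, i.e., for all $n\in\mathbb{N}$ and all $c\in C$, $\|x_{n+1}-c\|\le\|x_n-c\|$, and suppose that every weak cluster point of $(P_A x_n)_{n\in\mathbb{N}}$ lies in $C$. Then $(P_A x_n)_{n\in\mathbb{N}}$ converges weakly to some point in $C$.
   Context: $P_A$ denotes the orthogonal (metric) projection onto the closed convex set $A$. *)

(* Defs.v *)
From Stdlib Require Import Reals Lra Classical ClassicalEpsilon.
Open Scope R_scope.

Record HilbertSpace := {
  hcar :> Type;
  hzero : hcar;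
  hadd : hcar -> hcar -> hcar;
  hopp : hcar -> hcar;
  hscal : R -> hcar -> hcar;
  hinner : hcar -> hcar -> R;
  hadd_assoc : forall x y z, hadd x (hadd y z) = hadd (hadd x y) z;
  hadd_comm : forall x y, hadd x y = hadd y x;
  hadd_0 : forall x, hadd hzero x = x;
  hadd_opp : forall x, hadd x (hopp x) = hzero;
  hscal_assoc : forall a b x, hscal a (hscal b x) = hscal (a * b) x;
  hscal_1 : forall x, hscal 1 x = x;
  hscal_distr_l : forall a x y, hscal a (hadd x y) = hadd (hscal a x) (hscal a y);
  hscal_distr_r : forall a b x, hscal (a + b) x = hadd (hscal a x) (hscal b x);
  hinner_sym : forall x y, hinner x y = hinner y x;
  hinner_add_l : forall x y z, hinner (hadd x y) z = hinner x z + hinner y z;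
  hinner_scal_l : forall a x y, hinner (hscal a x) y = a * hinner x y;
  hinner_pos : forall x, 0 <= hinner x x;
  hinner_def : forall x, hinner x x = 0 -> x = hzero;
  hcomplete : forall u : nat -> hcar,
    (forall eps, eps > 0 -> exists N : nat, forall m n : nat, (m >= N)%nat -> (n >= N)%nat ->
        sqrt (hinner (hadd (u m) (hopp (u n))) (hadd (u m) (hopp (u n)))) < eps) ->
    exists l, Un_cv (fun n => sqrt (hinner (hadd (u n) (hopp l)) (hadd (u n) (hopp l)))) 0
}.

Section Defs.
Context {X : HilbertSpace}.

Definition hsub (x y : X) : X := hadd X x (hopp X y).
Definition hnorm (x : X) : R := sqrt (hinner X x x).

Definition converges (u : nat -> X) (l : X) : Prop :=
  Un_cv (fun n => hnorm (hsub (u n) l)) 0.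

Definition weakly_converges (u : nat -> X) (l : X) : Prop :=
  forall z : X, Un_cv (fun n => hinner X (u n) z) (hinner X l z).

Definition weak_cluster_point (u : nat -> X) (y : X) : Prop :=
  exists phi : nat -> nat, (forall n, (phi n < phi (S n))%nat) /\
    weakly_converges (fun n => u (phi n)) y.

Definition hclosed (S : X -> Prop) : Prop :=
  forall (u : nat -> X) (l : X), (forall n, S (u n)) -> converges u l -> S l.

Definition linear_subspace (A : X -> Prop) : Prop :=
  A (hzero X) /\ (forall x y, A x -> A y -> A (hadd X x y)) /\
  (forall a x, A x -> A (hscal X a x)).

Definition hconvex (C : X -> Prop) : Prop :=
  forall x y t, C x -> C y -> 0 <= t <= 1 ->
    C (hadd X (hscal X t x) (hscal X (1 - t) y)).

Definition is_proj (A : X -> Prop) (x p : X) : Prop :=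
  A p /\ forall a, A a -> hnorm (hsub x p) <= hnorm (hsub x a).

(* the metric projection P_A x (well-defined, i.e. the unique nearest point,
   when A is a nonempty closed convex set; chosen by Hilbert's epsilon) *)
Definition proj (A : X -> Prop) (x : X) : X :=
  epsilon (inhabits (hzero X)) (is_proj A x).

Definition fejer_monotone (u : nat -> X) (C : X -> Prop) : Prop :=
  forall (n : nat) (c : X), C c -> hnorm (hsub (u (S n)) c) <= hnorm (hsub (u n) c).

End Defs.

(* Main.v *)
Require Import Defs.
From Stdlib Require Import Reals Lra Psatz Classical ClassicalEpsilon.
Open Scope R_scope.

Section Alg.
Context {X : HilbertSpace}.
Local Notation ip := (hinner X).
Local Notation N x := (hinner X x x).

Lemma ip_addr (x y z : X) : ip x (hadd X y z) = ip x y + ip x z.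
Proof. rewrite !(hinner_sym X x), hinner_add_l; reflexivity. Qed.
Lemma ip_scalr a (x y : X) : ip x (hscal X a y) = a * ip x y.
Proof. rewrite !(hinner_sym X x), hinner_scal_l; reflexivity. Qed.
Lemma ip_zerol (y : X) : ip (hzero X) y = 0.
Proof. assert (H := hinner_add_l X (hzero X) (hzero X) y). rewrite hadd_0 in H. lra. Qed.
Lemma ip_zeror (y : X) : ip y (hzero X) = 0.
Proof. rewrite hinner_sym; apply ip_zerol. Qed.
Lemma ip_oppl (x y : X) : ip (hopp X x) y = - ip x y.
Proof. assert (H := hinner_add_l X x (hopp X x) y). rewrite hadd_opp, ip_zerol in H. lra. Qed.
Lemma ip_oppr (x y : X) : ip y (hopp X x) = - ip y x.
Proof. rewrite !(hinner_sym X y); apply ip_oppl. Qed.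

Lemma ip_subl (x y z : X) : ip (hsub x y) z = ip x z - ip y z.
Proof. unfold hsub; rewrite hinner_add_l, ip_oppl; ring. Qed.
Lemma ip_subr (x y z : X) : ip z (hsub x y) = ip z x - ip z y.
Proof. unfold hsub; rewrite ip_addr, ip_oppr; ring. Qed.

End Alg.

Ltac ipexp := repeat (rewrite ?hinner_add_l, ?ip_addr, ?hinner_scal_l, ?ip_scalr,
   ?ip_zerol, ?ip_zeror, ?ip_oppl, ?ip_oppr, ?ip_subl, ?ip_subr).

Section Alg2.
Context {X : HilbertSpace}.
Local Notation ip := (hinner X).
Local Notation N x := (hinner X x x).

Lemma veq (a b : X) : N (hsub a b) = 0 -> a = b.
Proof.
  intro H. apply hinner_def in H. unfold hsub in H.
  assert (E: hadd X (hadd X a (hopp X b)) b = b) by (rewrite H, hadd_0; auto).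
  rewrite <- hadd_assoc, (hadd_comm X (hopp X b)), hadd_opp, hadd_comm, hadd_0 in E. exact E.
Qed.

Lemma hopp_scal (x : X) : hopp X x = hscal X (-1) x.
Proof. apply veq. unfold hsub. ipexp. ring. Qed.

Lemma N_ge0 (x : X) : 0 <= N x.
Proof. apply hinner_pos. Qed.

Lemma hnorm_sq (x : X) : hnorm x * hnorm x = N x.
Proof. unfold hnorm; apply sqrt_sqrt, N_ge0. Qed.
Lemma hnorm_ge0 (x : X) : 0 <= hnorm x.
Proof. apply sqrt_pos. Qed.

Lemma CS (a b : X) : ip a b * ip a b <= N a * N b.
Proof.
  destruct (Req_dec (N b) 0) as [Hb|Hb].
  - apply hinner_def in Hb. rewrite Hb, ip_zeror. rewrite ip_zeror. lra.
  - assert (Hp: 0 < N b) by (pose proof (N_ge0 b); lra).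
    set (t := - ip a b / N b).
    pose proof (N_ge0 (hadd X a (hscal X t b))) as H.
    rewrite hinner_add_l, !ip_addr, !hinner_scal_l, !ip_scalr in H.
    rewrite (hinner_sym X b a) in H.
    assert (Ht : t * N b = - ip a b) by (unfold t; field; lra).
    assert (0 <= N a * N b + 2 * (t * N b) * ip a b + (t * N b) * (t * N b)) by nra.
    rewrite Ht in H0. nra.
Qed.

Lemma CS_abs (a b : X) : Rabs (ip a b) <= hnorm a * hnorm b.
Proof.
  rewrite <- (Rabs_pos_eq (hnorm a * hnorm b)) by (apply Rmult_le_pos; apply hnorm_ge0).
  apply Rsqr_le_abs_0. rewrite Rsqr_mult. unfold Rsqr. rewrite !hnorm_sq. apply CS.
Qed.

Lemma tri (a b : X) : hnorm (hadd X a b) <= hnorm a + hnorm b.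
Proof.
  apply Rsqr_incr_0_var; [| pose proof (hnorm_ge0 a); pose proof (hnorm_ge0 b); lra].
  unfold Rsqr. rewrite hnorm_sq. ipexp. try rewrite (hinner_sym X b a).
  pose proof (CS_abs a b). pose proof (Rle_abs (ip a b)).
  rewrite <- (hnorm_sq a), <- (hnorm_sq b). nra.
Qed.

Lemma hnorm_sub_sym (a b : X) : hnorm (hsub a b) = hnorm (hsub b a).
Proof. unfold hnorm. f_equal. ipexp. rewrite (hinner_sym X a b). ring. Qed.

Lemma ip_cont (x y z : X) : Rabs (ip x z - ip y z) <= hnorm (hsub x y) * hnorm z.
Proof. rewrite <- ip_subl. apply CS_abs. Qed.
End Alg2.
Section Riesz.
Context {X : HilbertSpace}.
Local Notation ip := (hinner X).
Local Notation N x := (hinner X x x).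

Lemma lt_sqrt x e : 0 <= x -> 0 < e -> x < e * e -> sqrt x < e.
Proof.
  intros. rewrite <- (sqrt_square e) by lra. apply sqrt_lt_1_alt. lra.
Qed.

Lemma inv_S_le (n n0 : nat) : (0 < n0)%nat -> (n0 <= n)%nat -> / INR (S n) <= / INR n0.
Proof.
  intros. apply Rinv_le_contravar. apply lt_0_INR; lia. apply le_INR; lia.
Qed.

Lemma riesz (K : X -> Prop) (g : X -> R) (M : R) :
  hclosed K -> linear_subspace K ->
  (forall a b, K a -> K b -> g (hadd X a b) = g a + g b) ->
  (forall s a, K a -> g (hscal X s a) = s * g a) ->
  (forall a, K a -> Rabs (g a) <= M * hnorm a) ->
  exists y, K y /\ forall v, K v -> ip y v = g v.
Proof.
  intros Hcl [K0 [Kadd Kscal]] gadd gscal gM.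
  set (M0 := Rmax M 0).
  assert (HM0 : 0 <= M0) by apply Rmax_r.
  assert (gM0 : forall a, K a -> Rabs (g a) <= M0 * hnorm a).
  { intros a Ka. eapply Rle_trans. apply gM; auto. apply Rmult_le_compat_r.
    apply hnorm_ge0. apply Rmax_l. }
  clear gM.
  assert (Kopp : forall a, K a -> K (hopp X a)) by (intros; rewrite hopp_scal; auto).
  assert (Ksub : forall a b, K a -> K b -> K (hsub a b)) by (intros; unfold hsub; auto).
  assert (gsub : forall a b, K a -> K b -> g (hsub a b) = g a - g b).
  { intros a b Ka Kb. unfold hsub. rewrite hopp_scal. rewrite gadd, gscal by auto. ring. }
  set (Q := fun y => N y - 2 * g y).
  assert (Qlow : forall y, K y -> - (M0 * M0) <= Q y).
  { intros y Ky. unfold Q. rewrite <- hnorm_sq. pose proof (gM0 y Ky).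
    pose proof (Rle_abs (g y)). pose proof (hnorm_ge0 y). pose proof (Rle_0_sqr (hnorm y - M0)). unfold Rsqr in *. nra. }
  set (E := fun r => exists y, K y /\ r = - Q y).
  destruct (completeness E) as [m [Hub Hlub]].
  { exists (M0 * M0). intros r [y [Ky ->]]. pose proof (Qlow y Ky). lra. }
  { exists (- Q (hzero X)). exists (hzero X). auto. }
  assert (Hlow : forall y, K y -> - m <= Q y).
  { intros y Ky. assert (E (- Q y)) by (exists y; auto). pose proof (Hub _ H). lra. }
  assert (Happ : forall eps, 0 < eps -> exists y, K y /\ Q y < - m + eps).
  { intros eps Heps. apply NNPP. intro Hn.
    assert (is_upper_bound E (m - eps)).
    { intros r [y [Ky ->]]. apply Rnot_lt_le. intro Hc. apply Hn. exists y. split; auto. lra. }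
    pose proof (Hlub _ H). lra. }
  set (ys := fun n : nat => epsilon (inhabits (hzero X)) (fun y => K y /\ Q y < - m + / INR (S n))).
  assert (Hys : forall n, K (ys n) /\ Q (ys n) < - m + / INR (S n)).
  { intro n. unfold ys. apply epsilon_spec. apply Happ. apply Rinv_0_lt_compat, lt_0_INR; lia. }
  assert (par : forall a b, K a -> K b ->
    N (hsub a b) = 2 * Q a + 2 * Q b - 4 * Q (hscal X (/2) (hadd X a b))).
  { intros a b Ka Kb. unfold Q. rewrite gscal, gadd by auto. ipexp.
    rewrite (hinner_sym X b a). field. }
  assert (Hcau : forall eps, eps > 0 -> exists N0 : nat, forall p q : nat, (p >= N0)%nat -> (q >= N0)%nat ->
        sqrt (ip (hadd X (ys p) (hopp X (ys q))) (hadd X (ys p) (hopp X (ys q)))) < eps).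
  { intros eps Heps. destruct (archimed_cor1 (eps * eps / 4)) as [N0 [HN0 HN0p]]. nra.
    exists N0. intros p q Hp Hq. apply lt_sqrt. apply N_ge0. lra.
    change (hadd X (ys p) (hopp X (ys q))) with (hsub (ys p) (ys q)).
    destruct (Hys p) as [Kp Qp]. destruct (Hys q) as [Kq Qq].
    rewrite par by auto.
    assert (Kh : K (hscal X (/ 2) (hadd X (ys p) (ys q)))) by auto.
    pose proof (Hlow _ Kh). pose proof (inv_S_le p N0 HN0p Hp). pose proof (inv_S_le q N0 HN0p Hq).
    lra. }
  destruct (hcomplete X ys Hcau) as [y Hy].
  assert (Ky : K y) by (apply (Hcl ys y); [intro; apply Hys | exact Hy]).
  assert (Qy : Q y <= - m).
  { apply le_epsilon. intros eps Heps.
    destruct (archimed_cor1 (eps / 2)) as [n1 [Hn1 Hn1p]]. lra.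
    set (eta := eps / (2 * (2 * hnorm y + 2 * M0 + 1))).
    assert (Heta : 0 < eta). { unfold eta. pose proof (hnorm_ge0 y). apply Rdiv_lt_0_compat; lra. }
    destruct (Hy eta Heta) as [n2 Hn2].
    set (n := max n1 n2).
    specialize (Hn2 n ltac:(lia)). unfold R_dist in Hn2. rewrite Rminus_0_r in Hn2.
    rewrite Rabs_pos_eq in Hn2 by apply sqrt_pos.
    change (sqrt _) with (hnorm (hsub (ys n) y)) in Hn2. rewrite hnorm_sub_sym in Hn2.
    destruct (Hys n) as [Kn Qn].
    set (d := hsub y (ys n)).
    assert (Kd : K d) by (apply Ksub; auto). change (hsub y (ys n)) with d in Hn2.
    assert (EQ : Q y = Q (ys n) + 2 * ip y d - N d - 2 * g d).
    { unfold d. rewrite gsub by auto. unfold Q. ipexp. rewrite (hinner_sym X (ys n) y). ring. }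
    pose proof (CS_abs y d). pose proof (Rle_abs (ip y d)). pose proof (gM0 d Kd).
    pose proof (Rle_abs (- g d)). rewrite Rabs_Ropp in H2. pose proof (N_ge0 d).
    pose proof (inv_S_le n n1 Hn1p ltac:(lia)).
    pose proof (hnorm_ge0 y). pose proof (hnorm_ge0 d).
    assert ((2 * hnorm y + 2 * M0) * hnorm d <= eps / 2).
    { apply Rle_trans with ((2 * hnorm y + 2 * M0 + 1) * eta).
      apply Rmult_le_compat; lra. unfold eta. right. field; lra. }
    nra. }
  exists y. split; auto.
  intros v Kv.
  set (c := ip y v - g v).
  set (s := - c / (N v + 1)).
  pose proof (N_ge0 v).
  assert (Kw : K (hadd X y (hscal X s v))) by auto.
  pose proof (Hlow _ Kw).
  assert (EQ : Q (hadd X y (hscal X s v)) = Q y + 2 * s * c + s * s * N v).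
  { unfold Q, c. rewrite gadd, gscal by auto. ipexp. rewrite (hinner_sym X v y). ring. }
  assert (Hs : s * (N v + 1) = - c) by (unfold s; field; lra).
  assert (0 <= 2 * s * c + s * s * N v) by lra.
  assert (0 <= (2 * s * c + s * s * N v) * ((N v + 1) * (N v + 1))) by (apply Rmult_le_pos; nra).
  replace ((2 * s * c + s * s * N v) * ((N v + 1) * (N v + 1))) with
    (2 * (s * (N v + 1)) * c * (N v + 1) + (s * (N v + 1)) * (s * (N v + 1)) * N v) in H2 by ring.
  rewrite Hs in H2.
  assert (c * c * (N v + 2) <= 0) by nra.
  assert (Hc : c = 0) by nra. unfold c in Hc. lra.
Qed.
End Riesz.
Section Proj.
Context {X : HilbertSpace}.
Local Notation ip := (hinner X).
Local Notation N x := (hinner X x x).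

Lemma N_le_hnorm (a b : X) : N a <= N b -> hnorm a <= hnorm b.
Proof. intro; unfold hnorm; apply sqrt_le_1_alt; auto. Qed.
Lemma hnorm_le_N (a b : X) : hnorm a <= hnorm b -> N a <= N b.
Proof. intro. rewrite <- !hnorm_sq. pose proof (hnorm_ge0 a). nra. Qed.

Lemma pyth (A : X -> Prop) (x p a : X) :
  (forall v, A v -> ip p v = ip x v) -> A p -> A a ->
  N (hsub x a) = N (hsub x p) + N (hsub p a).
Proof.
  intros Hp Ap Aa. ipexp. rewrite (Hp p Ap), (Hp a Aa).
  rewrite (hinner_sym X a x), (hinner_sym X p x), (hinner_sym X a p), (Hp a Aa). ring.
Qed.

Lemma proj_spec (A : X -> Prop) (x : X) : hclosed A -> linear_subspace A ->
  A (proj A x) /\ forall v, A v -> ip (proj A x) v = ip x v.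
Proof.
  intros Hcl Hlin.
  destruct (riesz A (ip x) (hnorm x) Hcl Hlin) as [p [Ap Hp]].
  { intros; apply ip_addr. } { intros; apply ip_scalr. } { intros; apply CS_abs. }
  assert (Hip : is_proj A x p).
  { split; auto. intros a Aa. apply N_le_hnorm. rewrite (pyth A x p a) by auto.
    pose proof (N_ge0 (hsub p a)). lra. }
  assert (Hq : is_proj A x (proj A x)) by (unfold proj; apply epsilon_spec; eauto).
  destruct Hq as [Aq Hq].
  assert (E : proj A x = p).
  { apply veq. apply Rle_antisym; [| apply N_ge0].
    pose proof (hnorm_le_N _ _ (Hq p Ap)).
    rewrite (pyth A x p (proj A x)) in H by auto.
    assert (N (hsub (proj A x) p) = N (hsub p (proj A x))).
    { ipexp. rewrite (hinner_sym X p (proj A x)). ring. }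
    pose proof (N_ge0 (hsub x p)). lra. }
  rewrite E. auto.
Qed.
End Proj.
Definition SI (f : nat -> nat) := forall n, (f n < f (S n))%nat.

Lemma SI_lt f : SI f -> forall n m, (n < m)%nat -> (f n < f m)%nat.
Proof.
  intros Hf n m Hnm. induction Hnm. apply Hf. specialize (Hf m). lia.
Qed.
Lemma SI_le f : SI f -> forall n m, (n <= m)%nat -> (f n <= f m)%nat.
Proof. intros Hf n m H. destruct (Nat.eq_dec n m). subst; lia. apply Nat.lt_le_incl, SI_lt; auto; lia. Qed.
Lemma SI_ge f : SI f -> forall n, (n <= f n)%nat.
Proof. intros Hf n. induction n. lia. specialize (Hf n). lia. Qed.
Lemma SI_comp f g : SI f -> SI g -> SI (fun n => f (g n)).
Proof. intros Hf Hg n. apply SI_lt; auto. Qed.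

Lemma cv_ext (u v : nat -> R) l : (forall n, u n = v n) -> Un_cv u l -> Un_cv v l.
Proof. intros E H eps He. destruct (H eps He) as [N0 HN]. exists N0. intros. rewrite <- E. auto. Qed.

Lemma cv_sub (u : nat -> R) l f : SI f -> Un_cv u l -> Un_cv (fun n => u (f n)) l.
Proof.
  intros Hf H eps He. destruct (H eps He) as [N0 HN]. exists N0. intros n Hn.
  apply HN. pose proof (SI_ge f Hf n). lia.
Qed.

Lemma cv_const c : Un_cv (fun _ => c) c.
Proof. intros eps He. exists 0%nat. intros. unfold R_dist. rewrite Rminus_diag, Rabs_R0. auto. Qed.

Lemma extract (P : nat -> nat -> Prop) :
  (forall k N0, exists n, (n >= N0)%nat /\ P k n) ->
  exists f, SI f /\ forall k, P k (f k).
Proof.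
  intro H.
  set (nxt := fun k N0 => epsilon (inhabits 0%nat) (fun n => (n >= N0)%nat /\ P k n)).
  assert (Hn : forall k N0, (nxt k N0 >= N0)%nat /\ P k (nxt k N0)).
  { intros. unfold nxt. apply epsilon_spec. auto. }
  set (f := fix f k := match k with 0 => nxt 0%nat 0%nat | S k' => nxt k (S (f k')) end).
  exists f. split.
  - intro n. simpl. destruct (Hn (S n) (S (f n))). lia.
  - intro k. destruct k; simpl; apply Hn.
Qed.

Lemma BW_sub (v : nat -> R) B : (forall n, Rabs (v n) <= B) ->
  exists f l, SI f /\ Un_cv (fun n => v (f n)) l.
Proof.
  intro HB.
  destruct (Bolzano_Weierstrass v (fun c => - B <= c <= B) (compact_P3 (-B) B)) as [l Hl].
  { intro n. specialize (HB n). split; [pose proof (Rabs_Ropp (v n)); pose proof (Rle_abs (- v n)) | pose proof (Rle_abs (v n))]; lra. }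
  destruct (extract (fun k n => Rabs (v n - l) < / INR (S k))) as [f [Hf Pf]].
  { intros k N0. assert (Hd : 0 < / INR (S k)) by (apply Rinv_0_lt_compat, lt_0_INR; lia).
    destruct (Hl (disc l (mkposreal _ Hd)) N0) as [p [Hp Vp]].
    { exists (mkposreal _ Hd). intros x Hx. exact Hx. }
    exists p. split; auto. }
  exists f, l. split; auto.
  intros eps He. destruct (archimed_cor1 eps He) as [K [HK HKp]].
  exists K. intros n Hn. unfold R_dist. apply Rlt_le_trans with (/ INR (S n)). apply Pf.
  apply Rle_trans with (/ INR K); [| lra]. apply Rinv_le_contravar. apply lt_0_INR; lia. apply le_INR. lia.
Qed.

Lemma diag (v : nat -> nat -> R) (B : nat -> R) : (forall k n, Rabs (v k n) <= B k) ->
  exists d, SI d /\ forall k, exists l, Un_cv (fun n => v k (d n)) l.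
Proof.
  intro HB.
  set (ch := fun w : nat -> R => epsilon (inhabits (fun n : nat => n))
                (fun s => SI s /\ exists l, Un_cv (fun n => w (s n)) l)).
  assert (Hch : forall w b, (forall n, Rabs (w n) <= b) -> SI (ch w) /\ exists l, Un_cv (fun n => w (ch w n)) l).
  { intros w b Hw. unfold ch. apply epsilon_spec.
    destruct (BW_sub w b Hw) as [f [l [Hf Hl]]]. exists f. eauto. }
  set (Phi := fix Phi k := match k with
                | 0 => ch (v 0%nat)
                | S k' => fun m => Phi k' (ch (fun n => v k (Phi k' n)) m) end).
  assert (HPhi : forall k, SI (Phi k) /\ exists l, Un_cv (fun n => v k (Phi k n)) l).
  { intro k. destruct k.
    - simpl. apply (Hch _ (B 0%nat)). auto.
    - assert (SI (Phi k)).
      { induction k. simpl. apply (Hch _ (B 0%nat)). auto.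
        simpl. apply SI_comp. auto. apply (Hch _ (B (S k))). auto. }
      simpl. destruct (Hch (fun n => v (S k) (Phi k n)) (B (S k))) as [H1 H2]. auto.
      split; auto. apply SI_comp; auto. }
  assert (Nest : forall k j, (k <= j)%nat -> exists t, SI t /\ forall m, Phi j m = Phi k (t m)).
  { intros k j Hkj. induction Hkj.
    - exists (fun m => m). split; auto. intro n; lia.
    - destruct IHHkj as [t [Ht Et]].
      destruct (Hch (fun n => v (S m) (Phi m n)) (B (S m))) as [H1 _]. auto.
      exists (fun n => t (ch (fun n => v (S m) (Phi m n)) n)). split. apply SI_comp; auto.
      intro n. simpl. apply Et. }
  exists (fun n => Phi n n). split.
  - intro n. simpl. destruct (Hch (fun m => v (S n) (Phi n m)) (B (S n))) as [H1 _]. auto.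
    apply SI_lt. apply HPhi. pose proof (SI_ge _ H1 (S n)). lia.
  - intro k. destruct (HPhi k) as [_ [l Hl]]. exists l.
    intros eps He. destruct (Hl eps He) as [N0 HN]. exists (max k N0). intros n Hn.
    destruct (Nest k n ltac:(lia)) as [t [Ht Et]]. rewrite Et. apply HN.
    pose proof (SI_ge t Ht n). lia.
Qed.
Section Compact.
Context {X : HilbertSpace}.
Local Notation ip := (hinner X).
Local Notation N x := (hinner X x x).

Lemma lim_bound (u : nat -> R) l b : (forall n, Rabs (u n) <= b) -> Un_cv u l -> Rabs l <= b.
Proof.
  intros Hb Hl. apply Rnot_lt_le. intro Hc.
  destruct (Hl (Rabs l - b)) as [N0 HN]. lra.
  specialize (HN N0 (le_n _)). unfold R_dist in HN. specialize (Hb N0).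
  pose proof (Rabs_triang_inv l (u N0)). rewrite Rabs_minus_sym in HN. lra.
Qed.

Lemma weak_compact (u : nat -> X) B : (forall n, hnorm (u n) <= B) ->
  exists f y, SI f /\ weakly_converges (fun n => u (f n)) y.
Proof.
  intro HB.
  assert (HB0 : 0 <= B) by (pose proof (hnorm_ge0 (u 0%nat)); specialize (HB 0%nat); lra).
  destruct (diag (fun k n => ip (u n) (u k)) (fun k => B * hnorm (u k))) as [d [Hd Hdk]].
  { intros k n. eapply Rle_trans. apply CS_abs. apply Rmult_le_compat_r. apply hnorm_ge0. auto. }
  set (w := fun n => u (d n)).
  assert (Hw : forall n, hnorm (w n) <= B) by (intro; apply HB).
  set (W := fun z => exists l, Un_cv (fun n => ip (w n) z) l).
  assert (Wcl : hclosed W).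
  { intros zs z HW Hz.
    assert (Hc : Cauchy_crit (fun n => ip (w n) z)).
    { intros eps He.
      destruct (Hz (eps / (4 * B + 1))) as [j Hj]. apply Rdiv_lt_0_compat; lra.
      specialize (Hj j (le_n _)). unfold R_dist in Hj. rewrite Rminus_0_r, Rabs_pos_eq in Hj by apply sqrt_pos.
      change (sqrt _) with (hnorm (hsub (zs j) z)) in Hj.
      destruct (HW j) as [lj Hlj].
      destruct (CV_Cauchy _ (exist _ lj Hlj) (eps / 2)) as [N0 HN]. lra.
      exists N0. intros n m Hn Hm. specialize (HN n m Hn Hm). unfold R_dist in *.
      pose proof (ip_cont (zs j) z (w n)). pose proof (ip_cont (zs j) z (w m)).
      rewrite !(hinner_sym X _ (w n)), !(hinner_sym X _ (w m)) in *.
      pose proof (Hw n). pose proof (Hw m). pose proof (hnorm_ge0 (hsub (zs j) z)).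
      assert (hnorm (hsub (zs j) z) * hnorm (w n) <= eps / (4 * B + 1) * B) by (apply Rmult_le_compat; lra || apply hnorm_ge0).
      assert (hnorm (hsub (zs j) z) * hnorm (w m) <= eps / (4 * B + 1) * B) by (apply Rmult_le_compat; lra || apply hnorm_ge0).
      assert (eps / (4 * B + 1) * B <= eps / 4).
      { unfold Rdiv. apply Rle_trans with (eps * (/ (4 * B + 1) * B)). right; ring.
        apply Rle_trans with (eps * / 4). apply Rmult_le_compat_l. lra.
        apply Rmult_le_reg_r with (4 * (4 * B + 1)). lra.
        replace (/ (4 * B + 1) * B * (4 * (4 * B + 1))) with (4 * B) by (field; lra).
        replace (/ 4 * (4 * (4 * B + 1))) with (4 * B + 1) by field. lra. right; ring. }
      pose proof (Rabs_triang (ip (w n) z - ip (w n) (zs j)) (ip (w n) (zs j) - ip (w m) z)).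
      pose proof (Rabs_triang (ip (w n) (zs j) - ip (w m) (zs j)) (ip (w m) (zs j) - ip (w m) z)).
      replace (ip (w n) z - ip (w n) (zs j) + (ip (w n) (zs j) - ip (w m) z)) with (ip (w n) z - ip (w m) z) in H7 by ring.
      replace (ip (w n) (zs j) - ip (w m) (zs j) + (ip (w m) (zs j) - ip (w m) z)) with (ip (w n) (zs j) - ip (w m) z) in H8 by ring.
      rewrite (Rabs_minus_sym (ip (w n) z) (ip (w n) (zs j))) in H7.
      lra. }
    destruct (R_complete _ Hc) as [l Hl]. exists l. exact Hl. }
  assert (Wlin : linear_subspace W).
  { split; [| split].
    - exists 0. apply cv_ext with (fun _ => 0). intro; rewrite ip_zeror; auto. apply cv_const.
    - intros a b [la Ha] [lb Hb]. exists (la + lb). apply cv_ext with (fun n => ip (w n) a + ip (w n) b).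
      intro; rewrite ip_addr; auto. apply CV_plus; auto.
    - intros s a [la Ha]. exists (s * la). apply cv_ext with (fun n => s * ip (w n) a).
      intro; rewrite ip_scalr; auto. apply CV_mult; auto. apply cv_const. }
  assert (Wu : forall k, W (u k)) by (intro k; apply (Hdk k)).
  assert (Wall : forall z, W z).
  { intro z. destruct (riesz W (ip z) (hnorm z) Wcl Wlin) as [p [Wp Hp]].
    { intros; apply ip_addr. } { intros; apply ip_scalr. } { intros; apply CS_abs. }
    destruct Wp as [lp Hlp]. exists lp. apply cv_ext with (fun n => ip (w n) p); auto.
    intro n. replace (ip (w n) z) with (ip (w n) p + ip (w n) (hsub z p)).
    rewrite (hinner_sym X _ (hsub z p)), ip_subl. unfold w. rewrite Hp by auto. ring.
    rewrite ip_subr. ring. }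
  set (f := fun z => epsilon (inhabits 0) (fun l => Un_cv (fun n => ip (w n) z) l)).
  assert (Hf : forall z, Un_cv (fun n => ip (w n) z) (f z)).
  { intro z. unfold f. apply epsilon_spec. apply Wall. }
  destruct (riesz (fun _ => True) f B) as [y [_ Hy]].
  { intros ? ? ? ? ; exact I. } { unfold linear_subspace; auto. }
  { intros a b _ _. apply (UL_sequence (fun n => ip (w n) (hadd X a b))); auto.
    apply cv_ext with (fun n => ip (w n) a + ip (w n) b). intro; rewrite ip_addr; auto. apply CV_plus; auto. }
  { intros s a _. apply (UL_sequence (fun n => ip (w n) (hscal X s a))); auto.
    apply cv_ext with (fun n => s * ip (w n) a). intro; rewrite ip_scalr; auto. apply CV_mult; auto. apply cv_const. }
  { intros a _. apply (lim_bound (fun n => ip (w n) a)); auto. intro n.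
    eapply Rle_trans. apply CS_abs. apply Rmult_le_compat_r. apply hnorm_ge0. auto. }
  exists d, y. split; auto. intro z. rewrite Hy by auto. apply Hf.
Qed.
End Compact.
Theorem lemma2p1 (X : HilbertSpace) (A C : X -> Prop) (x : nat -> X) :
  hclosed A -> linear_subspace A ->
  (exists c, C c) -> hclosed C -> hconvex C ->
  (forall c, C c -> A c) ->
  fejer_monotone x C ->
  (forall y, weak_cluster_point (fun n => proj A (x n)) y -> C y) ->
  exists y, C y /\ weakly_converges (fun n => proj A (x n)) y.
Proof.
  intros Acl Alin [c0 Cc0] Ccl Ccv CA Hfej Hclu.
  set (p := fun n => proj A (x n)).
  assert (Hp : forall n, A (p n) /\ forall v, A v -> hinner X (p n) v = hinner X (x n) v).
  { intro n. apply proj_spec; auto. }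
  destruct Alin as [A0 [Aadd Ascal]].
  assert (Asub : forall a b, A a -> A b -> A (hsub a b)).
  { intros. unfold hsub. rewrite hopp_scal. auto. }
  assert (Fej : forall c, C c -> forall n, hnorm (hsub (x n) c) <= hnorm (hsub (x 0%nat) c)).
  { intros c Cc n. induction n. lra. eapply Rle_trans. apply Hfej; auto. auto. }
  set (B := hnorm (hsub (x 0%nat) c0) + hnorm c0).
  assert (HB : forall n, hnorm (p n) <= B).
  { intro n. destruct (Hp n) as [An Hn].
    assert (E : p n = hadd X (hsub (p n) c0) c0).
    { symmetry. apply veq. ipexp. ring. }
    rewrite E. eapply Rle_trans. apply tri. unfold B. apply Rplus_le_compat_r.
    eapply Rle_trans; [| apply (Fej c0 Cc0 n)]. apply N_le_hnorm.
    rewrite (pyth A (x n) (p n) c0) by auto. pose proof (N_ge0 (hsub (x n) (p n))). lra. }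
  assert (Conv : forall c, C c -> exists l, Un_cv (fun n => hinner X (hsub (x n) c) (hsub (x n) c)) l).
  { intros c Cc. destruct (decreasing_cv (fun n => hinner X (hsub (x n) c) (hsub (x n) c))) as [l Hl].
    { intro n. apply hnorm_le_N. apply Hfej; auto. }
    { exists 0. intros r [i ->]. unfold opp_seq. pose proof (N_ge0 (hsub (x i) c)). lra. }
    eauto. }
  assert (F3 : forall c1 c2, C c1 -> C c2 -> exists L, Un_cv (fun n => hinner X (p n) (hsub c1 c2)) L).
  { intros c1 c2 C1 C2. destruct (Conv c1 C1) as [l1 H1]. destruct (Conv c2 C2) as [l2 H2].
    exists (/2 * (l2 - l1 + (hinner X c1 c1 - hinner X c2 c2))).
    apply cv_ext with (fun n => /2 * (hinner X (hsub (x n) c2) (hsub (x n) c2) - hinner X (hsub (x n) c1) (hsub (x n) c1)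
         + (hinner X c1 c1 - hinner X c2 c2))).
    { intro n. destruct (Hp n) as [_ Hn]. rewrite Hn by (apply Asub; auto). ipexp.
      rewrite (hinner_sym X c1 (x n)), (hinner_sym X c2 (x n)). field. }
    apply CV_mult. apply cv_const. apply CV_plus. apply CV_minus; auto. apply cv_const. }
  destruct (weak_compact p B HB) as [f0 [y0 [Hf0 Hy0]]].
  assert (Cy0 : C y0) by (apply Hclu; exists f0; split; auto).
  exists y0. split; auto.
  intro z. apply NNPP. intro Hnc.
  apply not_all_ex_not in Hnc as [eps Heps]. apply imply_to_and in Heps as [Hep Hex].
  destruct (extract (fun _ n => ~ R_dist (hinner X (p n) z) (hinner X y0 z) < eps)) as [psi [Hpsi Ppsi]].
  { intros _ N0. apply not_ex_all_not with (n := N0) in Hex.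
    apply not_all_ex_not in Hex as [n Hn]. apply imply_to_and in Hn. eauto. }
  destruct (weak_compact (fun n => p (psi n)) B (fun n => HB (psi n))) as [f1 [y1 [Hf1 Hy1]]].
  assert (Cy1 : C y1).
  { apply Hclu. exists (fun n => psi (f1 n)). split. apply (SI_comp psi f1); auto. exact Hy1. }
  destruct (F3 y0 y1 Cy0 Cy1) as [L HL].
  assert (L0 : L = hinner X y0 (hsub y0 y1)).
  { apply (UL_sequence (fun n => hinner X (p (f0 n)) (hsub y0 y1))).
    exact (cv_sub (fun n => hinner X (p n) (hsub y0 y1)) L f0 Hf0 HL). apply Hy0. }
  assert (L1 : L = hinner X y1 (hsub y0 y1)).
  { apply (UL_sequence (fun n => hinner X (p (psi (f1 n))) (hsub y0 y1))).
    exact (cv_sub (fun n => hinner X (p n) (hsub y0 y1)) L (fun n => psi (f1 n)) (SI_comp psi f1 Hpsi Hf1) HL).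
    apply Hy1. }
  assert (E : y0 = y1). { apply veq. rewrite ip_subl, <- L0, <- L1. ring. }
  subst y1.
  destruct (Hy1 z eps Hep) as [N0 HN]. apply (Ppsi (f1 N0)). apply HN. lia.
Qed.
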